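(* Let $R$ be a compact Hausdorff topological semiring. If $\theta$ is an equivalence relation on $R$ that is open in $R\times R$, then there exists a congruence $\theta_0$ on $R$ that is open in $R\times R$ and satisfies $\theta_0\subseteq\theta$.
   Context: A semiring is an algebra $(R,+,\cdot,0)$ such that $(R,+,0)$ is a commutative monoid, $(R,\cdot)$ is a semigroup (no multiplicative identity is required), multiplication distributes over addition on both sides, and $0\cdot x = x\cdot 0 = 0$ for all $x\in R$. A topological semiring is a semiring with a topology in which addition and multiplication are continuous. A congruence on $R$ is an equivalence relation on $R$ that is a congruence for both the additive monoid and the multiplicative semigroup (equivalently, a subsemiring of $R\times R$). *)

(* Defs.v *)
From HB Require Import structures.
From mathcomp Require Import all_boot all_order all_algebra.
From mathcomp Require Import all_classical all_reals topology.
Set Implicit Arguments. Unset Strict Implicit. Unset Printing Implicit Defensive.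
Local Open Scope classical_set_scope.

Definition is_semiring (R : Type) (add mul : R -> R -> R) (zero : R) : Prop :=
  (forall x y z, add x (add y z) = add (add x y) z) /\
  (forall x y, add x y = add y x) /\
  (forall x, add zero x = x) /\
  (forall x y z, mul x (mul y z) = mul (mul x y) z) /\
  (forall x y z, mul x (add y z) = add (mul x y) (mul x z)) /\
  (forall x y z, mul (add x y) z = add (mul x z) (mul y z)) /\
  (forall x, mul zero x = zero /\ mul x zero = zero).

Definition is_topological_semiring (R : topologicalType)
    (add mul : R -> R -> R) (zero : R) : Prop :=
  [/\ is_semiring add mul zero,
      continuous (fun p : R * R => add p.1 p.2) &
      continuous (fun p : R * R => mul p.1 p.2)].

Definition is_equivalence (R : Type) (th : R -> R -> Prop) : Prop :=
  [/\ (forall x, th x x),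
      (forall x y, th x y -> th y x) &
      (forall x y z, th x y -> th y z -> th x z)].

Definition is_congruence (R : Type) (add mul : R -> R -> R)
    (th : R -> R -> Prop) : Prop :=
  [/\ is_equivalence th,
      (forall x y x' y', th x x' -> th y y' -> th (add x y) (add x' y')) &
      (forall x y x' y', th x x' -> th y y' -> th (mul x y) (mul x' y'))].

Definition rel_set (R : Type) (th : R -> R -> Prop) : set (R * R) :=
  [set p | th p.1 p.2].

(* Main.v *)
Require Import Defs.
From mathcomp Require Import all_boot all_order all_algebra.
From mathcomp Require Import all_classical all_reals topology.
Local Open Scope classical_set_scope.
Lemma tube (K X : topologicalType) (W : set (K * X)) (x0 : X) :
  compact [set: K] -> open W -> (forall k, W (k, x0)) ->
  \forall x \near x0, forall k, W (k, x).
Proof.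
move=> hK hW hx.
have H : \forall x \near x0, [set: K] `<=` (fun k => W (k, x)).
  apply: ((compact_near_coveringP _).1 hK X (nbhs x0) (fun x k => W (k, x))).
  move=> k _.
  have : nbhs (k, x0) W by apply: open_nbhs_nbhs; split => //; apply: hx.
  move=> H; rewrite /prop_near2; move: H; apply: filterS; by case.
apply: filterS H => x /= H k; exact: H.
Qed.

Lemma cont_pair (T U V : topologicalType) (f : T -> U) (g : T -> V) :
  continuous f -> continuous g -> continuous (fun t => (f t, g t)).
Proof. by move=> hf hg t; apply: cvg_pair; [exact: hf | exact: hg]. Qed.

Lemma cont_op (T R : topologicalType) (op : R -> R -> R)
  (hop : continuous (fun p : R * R => op p.1 p.2)) (f g : T -> R) :
  continuous f -> continuous g -> continuous (fun t => op (f t) (g t)).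
Proof.
move=> hf hg t.
apply: (@continuous_comp _ _ _ (fun t => (f t, g t)) (fun p => op p.1 p.2)).
  exact: cont_pair.
exact: hop.
Qed.

Lemma cont_fst (U V : topologicalType) : continuous (@fst U V).
Proof. by move=> [a b]; apply: cvg_fst. Qed.

Lemma cont_snd (U V : topologicalType) : continuous (@snd U V).
Proof. by move=> [a b]; apply: cvg_snd. Qed.

Lemma open_preim (T U : topologicalType) (G : T -> U) (A : set U) :
  continuous G -> open A -> open (G @^-1` A).
Proof.
move=> hG hA; rewrite openE => t At.
exact: (hG t _ (open_nbhs_nbhs (conj hA At))).
Qed.

Lemma compact3 (R : topologicalType) : compact [set: R] ->
  compact [set: R * (R * R)].
Proof.
move=> h; rewrite -setXTT; apply: compact_setX => //.
by rewrite -setXTT; apply: compact_setX.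
Qed.

Lemma ccomp (T U V : topologicalType) (f : T -> U) (g : U -> V) :
  continuous f -> continuous g -> continuous (fun x => g (f x)).
Proof. by move=> hf hg x; apply: (@continuous_comp _ _ _ f g); [exact: hf | exact: hg]. Qed.

Lemma cont_id (T : topologicalType) : continuous (fun x : T => x).
Proof. by move=> x; apply: cvg_id. Qed.

Ltac ct add mul cadd cmul := lazymatch goal with
| |- continuous (fun q => q) => exact: cont_id
| |- continuous (fun q => fst (@?f q)) =>
    apply: (@ccomp _ _ _ f fst); [ct add mul cadd cmul | exact: cont_fst]
| |- continuous (fun q => snd (@?f q)) =>
    apply: (@ccomp _ _ _ f snd); [ct add mul cadd cmul | exact: cont_snd]
| |- continuous (fun q => add (@?f q) (@?g q)) =>
    apply: (@cont_op _ _ add cadd f g); ct add mul cadd cmul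
| |- continuous (fun q => mul (@?f q) (@?g q)) =>
    apply: (@cont_op _ _ mul cmul f g); ct add mul cadd cmul
end.

Theorem lemma4p5 (R : topologicalType) (add mul : R -> R -> R) (zero : R)
  (hR : is_topological_semiring add mul zero)
  (hcpt : compact [set: R]%classic) (hT2 : hausdorff_space R)
  (theta : R -> R -> Prop)
  (htheta : is_equivalence theta) (hopen : open (rel_set theta)) :
  exists theta0 : R -> R -> Prop,
    [/\ is_congruence add mul theta0, open (rel_set theta0) &
        (forall x y, theta0 x y -> theta x y)].
Proof.
case: hR => [[hA [hC [h0 [hM [hDl [hDr hz]]]]]] cadd cmul].
case: htheta => [hrefl hsym htrans].
pose th0 x y := forall a b c : R,
  [/\ theta (add a (mul b (mul x c))) (add a (mul b (mul y c))),
      theta (add a (mul b x)) (add a (mul b y)),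
      theta (add a (mul x c)) (add a (mul y c)) &
      theta (add a x) (add a y)].
have key : forall x x' y y' (g : R -> R),
    (forall t u, g (add t u) = add (g t) (g u)) ->
    (forall a, theta (add a (g x)) (add a (g x'))) ->
    (forall a, theta (add a (g y)) (add a (g y'))) ->
    forall a, theta (add a (g (add x y))) (add a (g (add x' y'))).
  move=> x x' y y' g hg hx hy a.
  have E : forall p q, add a (add p q) = add (add a q) p.
    by move=> p q; rewrite [add p q]hC hA.
  have E' : forall p q, add a (add p q) = add (add a p) q.
    by move=> p q; rewrite hA.
  rewrite !hg E; apply: (htrans _ _ _ (hx _)).
  rewrite -E E'; apply: (htrans _ _ _ (hy _)).
  by rewrite E'; apply: (hrefl).
exists th0; split.
- split.
  + split.
    * by move=> x a b c; split; apply: (hrefl).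
    * by move=> x y h a b c; case: (h a b c) => h1 h2 h3 h4; split; apply: (hsym).
    * move=> x y z h h' a b c; case: (h a b c) => h1 h2 h3 h4;
        case: (h' a b c) => h1' h2' h3' h4'; split; apply: (htrans); eassumption.
  + move=> x y x' y' hx hy a b c; split.
    * apply: (key _ _ _ _ (fun t => mul b (mul t c))) => [t u|a'|a'].
      - by rewrite hDr hDl.
      - by case: (hx a' b c).
      - by case: (hy a' b c).
    * apply: (key _ _ _ _ (fun t => mul b t)) => [t u|a'|a'].
      - by rewrite hDl.
      - by case: (hx a' b c).
      - by case: (hy a' b c).
    * apply: (key _ _ _ _ (fun t => mul t c)) => [t u|a'|a'].
      - by rewrite hDr.
      - by case: (hx a' b c).
      - by case: (hy a' b c).
    * apply: (key _ _ _ _ id) => [t u|a'|a'] //.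
      - by case: (hx a' b c).
      - by case: (hy a' b c).
  + move=> x y x' y' hx hy a b c; split.
    * rewrite -!hM; case: (hx a b (mul y c)) => h1 _ _ _.
      apply: (htrans _ _ _ h1); rewrite !(hM b x').
      by case: (hy a (mul b x') c).
    * case: (hx a b y) => h1 _ _ _.
      apply: (htrans _ _ _ h1); rewrite !(hM b x').
      by case: (hy a (mul b x') c).
    * rewrite -!hM; case: (hx a b (mul y c)) => _ _ h3 _.
      apply: (htrans _ _ _ h3).
      by case: (hy a x' c).
    * case: (hx a b y) => _ _ h3 _; apply: (htrans _ _ _ h3).
      by case: (hy a x' c).
- have cK := @compact3 R hcpt.
  have tb : forall (G : R * (R * R) -> R -> R),
      continuous (fun q : (R * (R * R)) * (R * R) => G q.1 q.2.1) ->
      continuous (fun q : (R * (R * R)) * (R * R) => G q.1 q.2.2) ->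
      forall x y, (forall k, theta (G k x) (G k y)) ->
      \forall p \near (x, y), forall k, theta (G k p.1) (G k p.2).
    move=> G c1 c2 x y hk.
    have := @tube (R * (R * R))%type (R * R)%type
      ((fun q : (R * (R * R)) * (R * R) => (G q.1 q.2.1, G q.1 q.2.2)) @^-1` rel_set theta)
      (x, y) cK.
    apply.
      by apply: open_preim => //; apply: cont_pair.
    exact: hk.
  rewrite openE => -[x y] hxy.
  have t1 := tb (fun k t => add k.1 (mul k.2.1 (mul t k.2.2)))
    ltac:(cbv beta; ct add mul cadd cmul) ltac:(cbv beta; ct add mul cadd cmul) x y
    (fun k => let: And4 h _ _ _ := hxy k.1 k.2.1 k.2.2 in h).
  have t2 := tb (fun k t => add k.1 (mul k.2.1 t))
    ltac:(cbv beta; ct add mul cadd cmul) ltac:(cbv beta; ct add mul cadd cmul) x y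
    (fun k => let: And4 _ h _ _ := hxy k.1 k.2.1 k.2.2 in h).
  have t3 := tb (fun k t => add k.1 (mul t k.2.2))
    ltac:(cbv beta; ct add mul cadd cmul) ltac:(cbv beta; ct add mul cadd cmul) x y
    (fun k => let: And4 _ _ h _ := hxy k.1 k.2.1 k.2.2 in h).
  have t4 := tb (fun k t => add k.1 t)
    ltac:(cbv beta; ct add mul cadd cmul) ltac:(cbv beta; ct add mul cadd cmul) x y
    (fun k => let: And4 _ _ _ h := hxy k.1 k.2.1 k.2.2 in h).
  have FF := @nbhs_filter _ (x, y).
  have H := filterI (filterI t1 t2) (filterI t3 t4).
  change (nbhs (x, y) (rel_set th0)); refine (@filterS _ _ FF _ (rel_set th0) _ (H FF FF FF)).
  move=> -[x' y'] /= [[h1 h2] [h3 h4]] a b c; split.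
  + exact: (h1 (a, (b, c))).
  + exact: (h2 (a, (b, c))).
  + exact: (h3 (a, (b, c))).
  + exact: (h4 (a, (b, c))).
- by move=> x y h; case: (h zero zero zero) => _ _ _; rewrite !h0.
Qed.
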